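(* Let $N$ be a finite set, $f: 2^{N} \to \mathbb{R} \cup \{-\infty\}$ an M$^\natural$-concave function, $X, Y \in \mathrm{dom}\, f$ and $I \subseteq X \setminus Y$. Put $C = X \cap Y$, $X_0 = X \setminus Y$, $Y_0 = Y \setminus X$, and for $J \subseteq Y_0$ define $f_1(J) = f((X_0 \setminus I)\cup C \cup J)$ and $f_2(J) = f(I \cup C \cup (Y_0 \setminus J))$. For $q \in \mathbb{R}^{Y_0}$ define $g_1(q) = \max_{J \subseteq Y_0}\{f_1(J) - q(J)\}$ and $g_2(q) = \max_{J \subseteq Y_0}\{f_2(J) - q(J)\}$, where $q(J) = \sum_{j \in J} q_j$. Then for every $q \in \mathbb{R}^{Y_0}$, $$g_1(q) + g_2(-q) \geq f(X) + f(Y).$$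
   Context: For $f: 2^N \to \mathbb{R}\cup\{-\infty\}$, $\mathrm{dom}\, f = \{X \subseteq N : f(X) > -\infty\}$. Notation: $X - i = X \setminus \{i\}$, $Y + i = Y \cup \{i\}$, $X - i + j = (X\setminus\{i\})\cup\{j\}$, $Y + i - j = (Y \cup\{i\})\setminus\{j\}$. Conventions: $(-\infty)+a = a+(-\infty) = (-\infty)+(-\infty) = -\infty$ for $a \in \mathbb{R}$, $-\infty \le -\infty$, and a maximum over an empty set is $-\infty$. A function $f: 2^N \to \mathbb{R}\cup\{-\infty\}$ with $\mathrm{dom}\, f \neq \emptyset$ is M$^\natural$-concave if for all $X, Y \subseteq N$ and $i \in X \setminus Y$: $$f(X)+f(Y) \le \max\Big[ f(X-i)+f(Y+i),\ \max_{j \in Y\setminus X}\{ f(X-i+j)+f(Y+i-j)\}\Big].$$ *)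

(* Defs.v *)
(* Extended reals R ∪ {-oo} are modelled as [option R],
   with [None] standing for -oo. *)
From HB Require Import structures.
From mathcomp Require Import all_boot all_order all_algebra.
Set Implicit Arguments. Unset Strict Implicit. Unset Printing Implicit Defensive.
Import Order.TTheory GRing.Theory Num.Theory.
Local Open Scope ring_scope.

Section Ext.
Variable R : realDomainType.

Definition eadd (x y : option R) : option R :=
  match x, y with Some a, Some b => Some (a + b) | _, _ => None end.

Definition ele (x y : option R) : bool :=
  match x, y with
  | None, _ => true
  | Some _, None => false
  | Some a, Some b => a <= b
  end.

Definition emax (x y : option R) : option R := if ele x y then y else x.
End Ext.

Notation "\emax_ ( i 'in' A ) F" := (\big[@emax _/None]_(i in A) F)
  (at level 41, F at level 41, i, A at level 50).

Definition dom (N : finType) (R : realDomainType) (f : {set N} -> option R) :=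
  [set X : {set N} | f X != None].

Definition Mnat_concave (N : finType) (R : realDomainType)
    (f : {set N} -> option R) : Prop :=
  dom f != set0 /\
  forall (X Y : {set N}) (i : N), i \in X :\: Y ->
    ele (eadd (f X) (f Y))
        (emax (eadd (f (X :\ i)) (f (i |: Y)))
              (\emax_(j in Y :\: X) eadd (f (j |: (X :\ i))) (f ((i |: Y) :\ j)))).

(* Main.v *)
Require Import Defs.
From HB Require Import structures.
From mathcomp Require Import all_boot all_order all_algebra.
From mathcomp Require Import lra.
Import Order.TTheory GRing.Theory Num.Theory.
Local Open Scope ring_scope.

Section Gen.
Variable R : realFieldType.
Implicit Types x y z : option R.

Lemma ele_refl x : ele x x.
Proof. by case: x => //= a; rewrite lexx. Qed.

Lemma ele_trans x y z : ele x y -> ele y z -> ele x z.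
Proof. case: x => [a|] //; case: y => [b|] //; case: z => [c|] //=; exact: le_trans. Qed.

Lemma ele_total x y : ele x y \/ ele y x.
Proof. case: x => [a|]; case: y => [b|] /=; try by auto.
by case/orP: (le_total a b); auto. Qed.

Lemma ele_emaxl x y : ele x (emax x y).
Proof. rewrite /emax; case: ifP => // _; exact: ele_refl. Qed.

Lemma ele_emaxr x y : ele y (emax x y).
Proof. rewrite /emax; case: ifP => [_|H]; first exact: ele_refl.
by case: (ele_total x y) => // H'; rewrite H' in H. Qed.

Lemma emax_cases x y : emax x y = x \/ emax x y = y.
Proof. rewrite /emax; case: ifP; auto. Qed.

Lemma bigemax_spec (I : eqType) (s : seq I) (P : pred I) (F : I -> option R) :
  (forall i, i \in s -> P i -> ele (F i) (\big[@emax R/None]_(i <- s | P i) F i)) /\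
  (\big[@emax R/None]_(i <- s | P i) F i = None \/
   exists i, [/\ i \in s, P i & \big[@emax R/None]_(i <- s | P i) F i = F i]).
Proof.
elim: s => [|a s [IH1 IH2]]; first by rewrite big_nil; split => //; left.
rewrite big_cons; case: ifP => Pa; last first.
  split; first by move=> i; rewrite inE => /orP[/eqP->|Hi]; [rewrite Pa|apply: IH1].
  case: IH2 => [->|[i [H1 H2 H3]]]; [by left| right; exists i; split => //; by rewrite inE H1 orbT].
split.
  move=> i; rewrite inE => /orP[/eqP->|Hi] Pi; first exact: ele_emaxl.
  exact: ele_trans (IH1 _ Hi Pi) (ele_emaxr _ _).
case: (emax_cases (F a) (\big[@emax R/None]_(j <- s | P j) F j)) => [->|->].
  by right; exists a; split => //; rewrite inE eqxx.
case: IH2 => [->|[i [H1 H2 H3]]]; [by left| right; exists i; split => //; by rewrite inE H1 orbT].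
Qed.

Lemma emax_ge (T : finType) (A : {pred T}) (F : T -> option R) i :
  i \in A -> ele (F i) (\emax_(j in A) F j).
Proof.
move=> iA; case: (@bigemax_spec _ (index_enum T) (fun j => j \in A) F) => H _.
apply: H => //; by rewrite mem_index_enum.
Qed.

Lemma emax_att (T : finType) (A : {pred T}) (F : T -> option R) :
  \emax_(j in A) F j = None \/ exists2 i, i \in A & \emax_(j in A) F j = F i.
Proof.
case: (@bigemax_spec _ (index_enum T) (fun j => j \in A) F) => _ [->|[i [_ H1 H2]]].
by left. by right; exists i.
Qed.
End Gen.
Section Main.
Variables (R : realFieldType) (N : finType).
Implicit Types (f : {set N} -> option R) (D U L Z J : {set N}) (q : N -> R).

Definition G (f : {set N} -> option R) (D : {set N}) (q : N -> R) (Z : {set N}) :=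
  \emax_(J in powerset D) eadd (f (Z :|: J)) (Some (- \sum_(j in J) q j)).

Lemma G_ge f D q Z J : J \subset D ->
  ele (eadd (f (Z :|: J)) (Some (- \sum_(j in J) q j))) (G f D q Z).
Proof.
move=> sJ; rewrite /G.
have := @emax_ge R _ (powerset D) (fun J => eadd (f (Z :|: J)) (Some (- \sum_(j in J) q j))) J.
by rewrite powersetE; apply.
Qed.

Lemma G_att f D q Z : G f D q Z = None \/
  exists2 J : {set N}, J \subset D & G f D q Z = eadd (f (Z :|: J)) (Some (- \sum_(j in J) q j)).
Proof.
case: (@emax_att R _ (powerset D) (fun J => eadd (f (Z :|: J)) (Some (- \sum_(j in J) q j)))).
  by left.
by move=> [J]; rewrite powersetE => sJ E; right; exists J.
Qed.

Lemma helpA (u l a1 a2 s1 s2 : R) c d g1 g2 : a1 + a2 = s1 + s2 ->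
  ele (eadd (Some u) (Some l)) (eadd c d) -> ele (eadd c (Some s1)) g1 ->
  ele (eadd d (Some s2)) g2 ->
  ele (eadd (eadd (Some u) (Some a1)) (eadd (Some l) (Some a2))) (eadd g1 g2).
Proof.
move=> e; case: c => [c|] //; case: d => [d|] //; case: g1 => [g1|] //;
  case: g2 => [g2|] //= *; lra.
Qed.

Arguments helpA {u l a1 a2 s1 s2 c d g1 g2}.

Lemma EX f D q U L i : Mnat_concave f -> L \subset U ->
  (forall x, x \in U -> x \notin D) -> i \in U -> i \notin L ->
  ele (eadd (G f D q U) (G f D q L)) (eadd (G f D q (U :\ i)) (G f D q (i |: L))).
Proof.
move=> fM sLU dU iU iL.
case: (G_att f D q U) => [->//|[J1 sJ1 EU]].
case: (G_att f D q L) => [->|[J2 sJ2 EL]]; first by case: (G f D q U).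
rewrite EU EL.
case E1: (f (U :|: J1)) => [u|]; last by [].
case E2: (f (L :|: J2)) => [l|]; last by case: (Some u).
have iJ1 : i \notin J1 by apply/negP => /(subsetP sJ1); rewrite (negbTE (dU _ iU)).
have iJ2 : i \notin J2 by apply/negP => /(subsetP sJ2); rewrite (negbTE (dU _ iU)).
have iXY : i \in (U :|: J1) :\: (L :|: J2) by rewrite !inE negb_or iL iJ2 iU.
have := fM.2 (U :|: J1) (L :|: J2) i iXY; rewrite E1 E2.
set A := eadd (f _) (f _); set B := \emax_(j in _) _.
case: (@emax_cases R A B) => ->.
  rewrite /A.
  have e1 : (U :|: J1) :\ i = (U :\ i) :|: J1.
    apply/setP=> x; rewrite !inE; case: (eqVneq x i) => [->|ne] /=; first by rewrite (negbTE iJ1).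
    by [].
  have e2 : i |: (L :|: J2) = (i |: L) :|: J2.
    by apply/setP=> x; rewrite !inE orbA.
  rewrite e1 e2 => H.
  apply: (helpA _ H (G_ge f D q (U :\ i) J1 sJ1) (G_ge f D q (i |: L) J2 sJ2)).
  by [].
rewrite /B; case: (@emax_att R _ ((L :|: J2) :\: (U :|: J1)) (fun j => eadd (f (j |: (U :|: J1) :\ i)) (f ((i |: (L :|: J2)) :\ j)))) => [->//|[j]].
rewrite !inE negb_or => /andP[/andP[jU jJ1] jLJ2] ->.
have jL : j \notin L by apply/negP => /(subsetP sLU); rewrite (negbTE jU).
have jJ2 : j \in J2 by move: jLJ2; rewrite (negbTE jL).
have jD : j \in D by apply: (subsetP sJ2).
have ji : j != i by apply/eqP => eji; move: jU; rewrite eji iU.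
have e1 : j |: ((U :|: J1) :\ i) = (U :\ i) :|: (j |: J1).
  apply/setP=> x; rewrite !inE; case: (eqVneq x i) => [->|] /=.
    by rewrite (negbTE iJ1).
  by move=> _; rewrite orbCA.
have e2 : (i |: (L :|: J2)) :\ j = (i |: L) :|: (J2 :\ j).
  apply/setP=> x; rewrite !inE; case: (eqVneq x j) => [->|] /=.
    by rewrite (negbTE ji) (negbTE jL).
  by rewrite orbA.
have sJ1' : j |: J1 \subset D by rewrite subUset sub1set jD sJ1.
have sJ2' : J2 :\ j \subset D by apply: subset_trans sJ2; apply: subD1set.
rewrite e1 e2 => H.
apply: (helpA _ H (G_ge f D q (U :\ i) _ sJ1') (G_ge f D q (i |: L) _ sJ2')).
rewrite big_setU1 //= (big_setD1 _ jJ2) /=; lra.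
Qed.

Lemma combSM (gu gl gui gil ga gb gb' : option R) :
  ele (eadd gu gl) (eadd gui gil) -> ele (eadd gui gl) (eadd ga gb') ->
  ele (eadd gu gb') (eadd gui gb) -> ele (eadd gu gl) (eadd ga gb).
Proof.
case: gu => [gu|] //; case: gl => [gl|] //; case: gui => [gui|] //;
  case: gil => [gil|] //; case: ga => [ga|] //; case: gb' => [gb'|] //;
  case: gb => [gb|] //= *; lra.
Qed.

Lemma SM f D q n : Mnat_concave f -> forall A B, #|B :\: A| = n ->
  (forall x, x \in A :|: B -> x \notin D) ->
  ele (eadd (G f D q (A :|: B)) (G f D q (A :&: B))) (eadd (G f D q A) (G f D q B)).
Proof.
move=> fM; elim: n => [|n IH] A B hc dAB.
  have sBA : B \subset A by rewrite -setD_eq0 -cards_eq0 hc.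
  rewrite (setUidPl sBA) (setIidPr sBA); exact: ele_refl.
have /set0Pn [i] : B :\: A != set0 by rewrite -card_gt0 hc.
rewrite inE => /andP[iA iB].
set B' := B :\ i.
have hc' : #|B' :\: A| = n.
  have : (B :\: A) :\ i = B' :\: A by apply/setP => x; rewrite !inE andbCA.
  move=> <-; move: hc; rewrite (cardsD1 i (B :\: A)) !inE iA iB /=.
  by rewrite add1n => -[].
have e1 : A :|: B' = (A :|: B) :\ i.
  apply/setP => x; rewrite !inE; case: (eqVneq x i) => [->|] //=.
  by rewrite (negbTE iA).
have e2 : A :&: B' = A :&: B.
  apply/setP => x; rewrite !inE; case: (eqVneq x i) => [->|] //=.
  by rewrite (negbTE iA).
have dAB' : forall x, x \in A :|: B' -> x \notin D.
  by move=> x; rewrite e1 inE => /andP[_]; apply: dAB.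
have H1 := IH A B' hc' dAB'.
rewrite e1 e2 in H1.
have iU : i \in A :|: B by rewrite inE iB orbT.
have iL : i \notin A :&: B by rewrite inE negb_and iA.
have H2 := @EX f D q _ _ i fM (subset_trans (subsetIr A B) (subsetUr A B)) dAB iU iL.
have iB' : i \notin B' by rewrite !inE eqxx.
have sB' : B' \subset A :|: B by apply: subset_trans (subsetUr A B); apply: subD1set.
have H3 := @EX f D q _ _ i fM sB' dAB iU iB'.
rewrite /B' setD1K // in H3.
exact: combSM H2 H1 H3.
Qed.
End Main.

Arguments G {R N}.
Arguments G_ge {R N}.
Arguments G_att {R N}.
Arguments SM {R N}.

Lemma finc (R : realFieldType) (fx fy gx gc ga gic g2 : option R) (s : R) :
  ele fx gx -> ele (eadd fy (Some (- s))) gc -> ele (eadd gx gc) (eadd ga gic) ->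
  (gic = None \/ ele (eadd gic (Some s)) g2) -> ele (eadd fx fy) (eadd ga g2).
Proof.
move=> h0 h1 h2 [E|h3].
  move: h0 h1 h2; rewrite E; case: fx => [fx|] //; case: fy => [fy|] //;
  case: gx => [gx|] //; case: gc => [gc|] //; by case: ga.
move: h0 h1 h2 h3; case: fx => [fx|] //; case: fy => [fy|] //;
  case: gx => [gx|] //; case: gc => [gc|] //; case: ga => [ga|] //;
  case: gic => [gic|] //; case: g2 => [g2|] //= *; lra.
Qed.

Theorem lemma1 (R : realFieldType) (N : finType) (f : {set N} -> option R)
    (X Y I : {set N}) (q : N -> R) :
  Mnat_concave f -> X \in dom f -> Y \in dom f -> I \subset X :\: Y ->
  let C := X :&: Y in
  let X0 := X :\: Y in
  let Y0 := Y :\: X in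
  let f1 := fun J : {set N} => f ((X0 :\: I) :|: C :|: J) in
  let f2 := fun J : {set N} => f (I :|: C :|: (Y0 :\: J)) in
  let qs := fun (p : N -> R) (J : {set N}) => \sum_(j in J) p j in
  let g1 := fun p : N -> R =>
    \emax_(J in powerset Y0) eadd (f1 J) (Some (- qs p J)) in
  let g2 := fun p : N -> R =>
    \emax_(J in powerset Y0) eadd (f2 J) (Some (- qs p J)) in
  ele (eadd (f X) (f Y)) (eadd (g1 q) (g2 (fun j => - q j))).
Proof.
move=> fM hX hY sI.
pose C := X :&: Y; pose X0 := X :\: Y; pose Y0 := Y :\: X.
pose g2 := \emax_(J in powerset Y0) eadd (f (I :|: C :|: (Y0 :\: J))) (Some (- \sum_(j in J) - q j)).
change (ele (eadd (f X) (f Y)) (eadd (G f Y0 q ((X0 :\: I) :|: C)) g2)).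
have dX : forall x, x \in X -> x \notin Y0 by move=> x; rewrite /Y0 !inE => ->.
have h0 : ele (f X) (G f Y0 q X).
  have := G_ge f Y0 q X set0 (sub0set Y0).
  rewrite setU0 big_set0 oppr0; case: (f X) => [a|] //=; by rewrite addr0.
have h1 : ele (eadd (f Y) (Some (- \sum_(j in Y0) q j))) (G f Y0 q C).
  have := G_ge f Y0 q C Y0 (subxx Y0).
  have -> : C :|: Y0 = Y.
    by apply/setP => x; rewrite /C /Y0 !inE; case: (x \in X); case: (x \in Y).
  by [].
have sI' : forall x, x \in I -> (x \in X) && (x \notin Y).
  by move=> x /(subsetP sI); rewrite !inE andbC.
have eU : ((X0 :\: I) :|: C) :|: (I :|: C) = X.
  apply/setP => x; rewrite /X0 /C !inE.
  case xI: (x \in I); first by have := sI' x xI; case/andP => -> _; rewrite !orbT.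
  by rewrite /=; case: (x \in X); case: (x \in Y).
have eI : ((X0 :\: I) :|: C) :&: (I :|: C) = C.
  apply/setP => x; rewrite /X0 /C !inE.
  case xI: (x \in I); last by rewrite /=; case: (x \in X); case: (x \in Y).
  by have := sI' x xI; case/andP => -> /negbTE ->.
have dAB : forall x, x \in ((X0 :\: I) :|: C) :|: (I :|: C) -> x \notin Y0.
  by move=> x; rewrite eU; apply: dX.
have h2 := SM f Y0 q _ fM ((X0 :\: I) :|: C) (I :|: C) (erefl #|(I :|: C) :\: ((X0 :\: I) :|: C)|) dAB.
rewrite eU eI in h2.
have h3 : G f Y0 q (I :|: C) = None \/
    ele (eadd (G f Y0 q (I :|: C)) (Some (\sum_(j in Y0) q j))) g2.
  case: (G_att f Y0 q (I :|: C)) => [->|[K sK ->]]; [by left|right].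
  have := @emax_ge R _ (powerset Y0)
    (fun J => eadd (f (I :|: C :|: (Y0 :\: J))) (Some (- \sum_(j in J) - q j))) (Y0 :\: K).
  rewrite powersetE subsetDl => /(_ isT).
  have eK : Y0 :\: (Y0 :\: K) = K.
    apply/setP => x; rewrite 2!in_setD; move: (subsetP sK x).
    by case: (x \in K); case: (x \in Y0) => //= /(_ isT).
  rewrite /g2 eK sumrN opprK.
  rewrite [\sum_(j in Y0) q j](big_setID K) /= (setIidPr sK).
  case: (f (I :|: C :|: K)) => [a|] //=; case: (\emax_(J in _) _) => [b|] //= *; lra.
exact: finc h0 h1 h2 h3.
Qed.
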